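(* Let $A$ (the source) and $B$ (the target) be finite metric graphs, and let $L(A)$ and $L(B)$ denote their perimeters (the sums of all edge lengths). Let $\alpha>0$ and let $m:\alpha A\to B$ be an isometric covering, where $\alpha A$ denotes $A$ with every edge length multiplied by $\alpha$. Let $\mathcal{D}_m$ be the set of edges of $B$ that are doubly covered by $m$, meaning that every point of the edge has at least two preimages under $m$. Then $$\alpha \;\ge\; \frac{L(B)+\sum_{e\in\mathcal{D}_m}\ell(e)}{L(A)},$$ where $\ell(e)$ is the length of $e$. In particular, the optimal scale factor $\mathrm{OPT}$ satisfies this inequality, with $\mathcal{D}_m$ taken for an isometric covering achieving $\mathrm{OPT}$.
   Context: A metric graph is a graph with a positive length assigned to each edge. It is viewed as a metric space: each edge is a segment of its length, glued at the vertices. An isometric covering of a metric space $Y$ by a metric space $X$ is a surjective map $m:X\to Y$ such that, for every path $p$ in $X$, the arc length of $p$ in $X$ equals the arc length of the curve $m(p)$ in $B$, counted with multiplicity. The optimal scale factor $\mathrm{OPT}$ for source $A$ and target $B$ is the minimum $\alpha$ such that $\alpha A$ has an isometric covering onto $B$. *)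

(* Defs.v *)
From HB Require Import structures.
From mathcomp Require Import all_boot all_order all_algebra.
From mathcomp Require Import all_classical all_reals ereal.
Set Implicit Arguments. Unset Strict Implicit. Unset Printing Implicit Defensive.
Import Order.TTheory GRing.Theory Num.Theory.
Local Open Scope ring_scope.

Record mgraph (R : realType) := MGraph {
  gV : finType;
  gE : finType;
  src : gE -> gV;
  tgt : gE -> gV;
  len : gE -> R;
  len_pos : forall e, 0 < len e }.

Arguments gV {R} m. Arguments gE {R} m. Arguments src {R} m _. Arguments tgt {R} m _.
Arguments len {R} m _. Arguments len_pos {R} m e.

Section MetricGraph.
Variable R : realType.

Definition scale (G : mgraph R) (alpha : R) (ha : 0 < alpha) : mgraph R :=
  @MGraph R (gV G) (gE G) (src G) (tgt G) (fun e => alpha * len G e)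
    (fun e => mulr_gt0 ha (len_pos G e)).

Definition perimeter (G : mgraph R) : R := \sum_(e : gE G) len G e.

(* Points of the metric space |G|: vertices, and interior points of edges,
   an interior gpoint of e being given by its arc-length parameter t in (0, len e)
   measured from src e. *)
Inductive gpoint (G : mgraph R) :=
| PV : gV G -> gpoint G
| PE : forall (e : gE G) (t : R), 0 < t < len G e -> gpoint G.

Definition on_edge (G : mgraph R) (x : gpoint G) (e : gE G) (t : R) : Prop :=
  match x with
  | PV v => (t = 0 /\ src G e = v) \/ (t = len G e /\ tgt G e = v)
  | PE e' t' _ => e' = e /\ t' = t
  end.

Inductive walk (G : mgraph R) : gpoint G -> gpoint G -> R -> Prop :=
| walk_nil x : walk x x 0
| walk_cons x z y e s t c :
    on_edge x e s -> on_edge z e t -> walk z y c -> walk x y (`|t - s| + c).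

(* The path (geodesic) metric of G; +oo between different components. *)
Definition gdist (G : mgraph R) (x y : gpoint G) : \bar R :=
  ereal_inf [set (c%:E)%E | c in [set c | walk x y c]].

Definition is_path (G : mgraph R) (p : R -> gpoint G) : Prop :=
  forall t, 0 <= t <= 1 -> forall eps : R, 0 < eps ->
    exists2 delta : R, 0 < delta & forall s, 0 <= s <= 1 -> `|s - t| < delta ->
      (gdist (p t) (p s) < eps%:E)%E.

(* arc length of a curve c : [0,1] -> |G| (sup over partitions of [0,1]);
   this counts multiplicity. *)
Definition arc_length (G : mgraph R) (c : R -> gpoint G) : \bar R :=
  ereal_sup [set l | exists n (ts : nat -> R),
     [/\ ts 0%N = 0, ts n = 1, (forall i, (i < n)%N -> ts i <= ts i.+1) &
         l = (\sum_(i < n) gdist (c (ts i)) (c (ts i.+1)))%E]].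

Definition isometric_covering (X Y : mgraph R) (m : gpoint X -> gpoint Y) : Prop :=
  (forall y, exists x, m x = y) /\
  (forall p : R -> gpoint X, is_path p -> arc_length (m \o p) = arc_length p).

Definition doubly_covered (X Y : mgraph R) (m : gpoint X -> gpoint Y) (e : gE Y) : Prop :=
  forall t (ht : 0 < t < len Y e),
    exists y1 y2, [/\ y1 <> y2, m y1 = PE ht & m y2 = PE ht].

End MetricGraph.

(* Main.v *)
Require Import Defs.
From HB Require Import structures.
From mathcomp Require Import all_boot all_order all_algebra.
From mathcomp Require Import all_classical all_reals ereal.
From mathcomp Require Import topology normedtype sequences measure lebesgue_measure.
From mathcomp Require Import ring lra.
Import Order.TTheory GRing.Theory Num.Theory.
Local Open Scope ring_scope.


Section Graph.
Context {R : realType}.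
Context {G : mgraph R}.

Definition clampr (L r : R) := if r <= 0 then 0 else if r <= L then r else L.

Definition pt (e : gE G) (r : R) : gpoint G :=
  (if (0 < r < len G e) as b return ((0 < r < len G e) = b -> gpoint G)
   then fun h => @PE R G e r h
   else fun _ => if r <= 0 then PV (src G e) else PV (tgt G e)) erefl.

Lemma pt_PE e r (h : 0 < r < len G e) : pt e r = PE h.
Proof.
rewrite /pt; move: (erefl (0 < r < len G e)).
case: {2 3}(0 < r < len G e) => h'; last by rewrite h in h'.
by congr PE; apply: bool_irrelevance.
Qed.

Lemma pt_on_edge e r : on_edge (pt e r) e (clampr (len G e) r).
Proof.
have L0 := len_pos G e.
rewrite /pt /clampr; move: (erefl (0 < r < len G e)).
case: {2 3}(0 < r < len G e) => h /=.
  move/andP: h => [h1 h2]; split => //.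
  by rewrite leNgt h1 /= (ltW h2).
case: ifP => r0; first by left.
right; split => //; case: ifP => // rL.
move: r0 => /negbT; rewrite -ltNge => r0.
move: rL; rewrite le_eqVlt => /orP[/eqP -> //|rL].
by move: h; rewrite r0 rL.
Qed.

Lemma walk_ge0 {x y : gpoint G} {c} : walk x y c -> 0 <= c.
Proof. by elim => // *; apply: addr_ge0. Qed.

Lemma gdist_walk {x y : gpoint G} {c} : walk x y c -> (gdist x y <= c%:E)%E.
Proof. by move=> w; apply: ereal_inf_lbound; exists c. Qed.

Lemma clamp_lip L r r' : 0 < L -> `|clampr L r' - clampr L r| <= `|r' - r|.
Proof.
move=> L0; have h1 := ler_norm (r' - r); have h2 := ler_norm (r - r').
rewrite distrC in h2; rewrite /clampr.
repeat case: ifP => ?; rewrite ler_norml; apply/andP; split; lra.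
Qed.

Lemma gdist_pt e r r' : (gdist (pt e r) (pt e r') <= `|r' - r|%:E)%E.
Proof.
have w : walk (pt e r) (pt e r')
   (`|clampr (len G e) r' - clampr (len G e) r| + 0).
  apply: walk_cons; [exact: pt_on_edge | exact: pt_on_edge | exact: walk_nil].
move: (gdist_walk w) => /le_trans; apply; rewrite addr0 lee_fin.
exact: clamp_lip (len_pos G e).
Qed.

Definition isPEb (b : gE G) (z : gpoint G) : bool :=
  if z is PE e _ _ then e == b else false.
Definition param (z : gpoint G) : R := if z is PE _ t _ then t else 0.

Lemma walk_local {x z : gpoint G} {d} : walk x z d -> forall b, isPEb b x ->
  d < param x -> d < len G b - param x ->
  isPEb b z && (`|param z - param x| <= d).
Proof.
elim => [y|x0 z0 y e s t c Hx Hz W IH] b.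
  by move=> -> _ _; rewrite subrr normr0 lexx.
case: x0 Hx => [//|e0 t0 h0] /= [E1 E2]; subst e0 t0 => /eqP Eb; subst b => d1 d2.
have c0 := walk_ge0 W.
have ht1 := ler_norm (t - s); have ht2 := ler_norm (s - t); rewrite distrC in ht2.
case: z0 Hz W IH => [v|e1 t1 h1] /= Hz W.
  by move: Hz => [[Et _]|[Et _]] _; exfalso; move/andP: h0 => [? ?]; lra.
move: Hz => [E1 E2]; subst e1 t1 => /(_ e) IH.
have /andP[-> H] : isPEb e y && (`|param y - t| <= c).
  by apply: IH; rewrite /= ?eqxx //; lra.
have := ler_normD (param y - t) (t - s).
by rewrite addrA subrK /=; lra.
Qed.

Lemma gdist_local (x z : gpoint G) b r : isPEb b x ->
  (gdist x z <= r%:E)%E -> r < param x -> r < len G b - param x ->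
  isPEb b z && (`|param z - param x| <= r).
Proof.
move=> Hb Hd r1 r2.
have key : forall r', r < r' -> r' < param x -> r' < len G b - param x ->
    isPEb b z && (`|param z - param x| < r').
  move=> r' h1 h2 h3.
  have : (gdist x z < r'%:E)%E by apply: (le_lt_trans Hd); rewrite lte_fin.
  case/ereal_inf_lt => _ [l w <-]; rewrite lte_fin => lr'.
  have /andP[-> H] := walk_local w b Hb (lt_trans lr' h2) (lt_trans lr' h3).
  by rewrite (le_lt_trans H lr').
pose mm := if param x <= len G b - param x then param x else len G b - param x.
have m1 : mm <= param x by rewrite /mm; case: ifP => //; move/negbT; rewrite -ltNge => /ltW.
have m2 : mm <= len G b - param x by rewrite /mm; case: ifP.
have m3 : r < mm by rewrite /mm; case: ifP.
have /andP[-> H1] := key ((r + mm) / 2) ltac:(lra) ltac:(lra) ltac:(lra).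
apply/ler_addgt0Pr => e e0.
have [re|re] := ltP (r + e) mm.
  by have /andP[_ H] := key (r + e) ltac:(lra) ltac:(lra) ltac:(lra); apply: ltW.
lra.
Qed.

End Graph.


Section Cover.
Context {R : realType} {A B : mgraph R} {alpha : R} {ha : 0 < alpha}.
Variable (m : gpoint (scale A ha) -> gpoint B).
Hypothesis Hcov : isometric_covering m.

Definition F (e : gE (scale A ha)) r := m (pt e r).

Lemma lipF e r r' : (gdist (F e r) (F e r') <= `|r' - r|%:E)%E.
Proof.
pose p t := pt (G:=scale A ha) e (r + t * (r' - r)).
have pp : is_path p.
  move=> t _ eps e0; exists (eps / (`|r' - r| + 1)).
    by apply: divr_gt0 => //; apply: ltr_wpDl.
  move=> s _ hs; apply: le_lt_trans (gdist_pt _ _ _) _; rewrite lte_fin.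
  rewrite opprD addrACA subrr add0r -mulrBl normrM.
  rewrite ltr_pdivlMr in hs; last by apply: ltr_wpDl.
  apply: le_lt_trans hs; rewrite mulrDr mulr1 lerDl; exact: normr_ge0.
have h1 := Hcov.2 p pp.
have h2 : (arc_length p <= `|r' - r|%:E)%E.
  apply: ge_ereal_sup => _ [n [ts [t0 tn tmono ->]]].
  apply: (@le_trans _ _ (\sum_(i < n) ((ts i.+1 - ts i) * `|r' - r|)%:E)%E).
    apply: lee_sum => i _.
    apply: le_trans (gdist_pt _ _ _) _; rewrite lee_fin.
    rewrite opprD addrACA subrr add0r -mulrBl normrM ger0_norm //.
    by rewrite subr_ge0; apply: tmono.
  rewrite sumEFin lee_fin -mulr_suml -(big_mkord xpredT (fun i => ts i.+1 - ts i)).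
  by rewrite telescope_sumr // t0 tn subr0 mul1r.
have h3 : (gdist (F e r) (F e r') <= arc_length (m \o p))%E.
  apply: ereal_sup_ubound; exists 1%N, (fun i => i%:R); split => //.
    by move=> i; rewrite ltnS leqn0 => /eqP ->; rewrite ler_nat.
  rewrite big_ord_recr big_ord0 /= add0r /p /F.
  by rewrite mul0r addr0 mul1r addrC subrK.
by apply: le_trans h3 _; rewrite h1.
Qed.

End Cover.


Section Meas.
Local Open Scope classical_set_scope.
Context {R : realType} {I : eqType}.
Variable f : I -> set R.
Hypothesis mf : forall i, measurable (f i).
Local Notation mu := (@lebesgue_measure R).

Fixpoint Ul (r : seq I) : set R := if r is i :: r' then f i `|` Ul r' else set0.
Fixpoint G2l (r : seq I) : set R :=
  if r is i :: r' then G2l r' `|` (f i `&` Ul r') else set0.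

Lemma Ul_meas r : measurable (Ul r).
Proof. by elim: r => [|i r IH] /=; [exact: measurable0 | exact: measurableU]. Qed.

Lemma G2l_meas r : measurable (G2l r).
Proof.
elim: r => [|i r IH] /=; first exact: measurable0.
by apply: measurableU => //; apply: measurableI => //; exact: Ul_meas.
Qed.

Lemma G2l_sub r : G2l r `<=` Ul r.
Proof.
elim: r => [|i r IH] //= y [/IH|[]]; by [right | left].
Qed.

Lemma list_meas r : (mu (Ul r) + mu (G2l r) <= \sum_(i <- r) mu (f i))%E.
Proof.
elim: r => [|i r IH] /=; first by rewrite big_nil !measure0 adde0.
rewrite big_cons.
have mU := Ul_meas r; have mG := G2l_meas r.
have e1 : (mu (f i `|` Ul r) <= mu (f i `\` Ul r) + mu (Ul r))%E.
  have -> : f i `|` Ul r = (f i `\` Ul r) `|` Ul r.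
    apply/seteqP; split => y [fy|uy]; try by right.
    - by have [?|?] := pselect (Ul r y); [right|left].
    - by move: fy => [? _]; left.
  by apply: measureU2 => //; apply: (measurableD (mf i) mU).
have e2 : (mu (G2l r `|` (f i `&` Ul r)) <= mu (G2l r) + mu (f i `&` Ul r))%E.
  by apply: measureU2 => //; apply: (measurableI _ _ (mf i) mU).
rewrite (measureDI mu (mf i) mU).
apply: le_trans (leeD e1 e2) _.
rewrite addeACA [X in (X + _)%E]addeC addeACA addeC.
by apply: leeD => //; rewrite addeC.
Qed.

Lemma memU r i y : i \in r -> f i y -> Ul r y.
Proof.
elim: r => [//|j r IH] /=; rewrite inE => /orP[/eqP <-|ir] fy; first by left.
by right; apply: IH.
Qed.

Lemma memG2 r i1 i2 y : uniq r -> i1 \in r -> i2 \in r -> i1 != i2 ->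
  f i1 y -> f i2 y -> G2l r y.
Proof.
elim: r => [//|j r IH] /= /andP[jr ur].
rewrite !inE => /orP[/eqP E1|i1r] /orP[/eqP E2|i2r] n12 f1 f2.
- by rewrite E1 E2 eqxx in n12.
- by right; split; [rewrite -E1 | exact: (memU _ _ _ i2r)].
- by right; split; [rewrite -E2 | exact: (memU _ _ _ i1r)].
- by left; apply: IH.
Qed.

End Meas.


Section Main.
Context {R : realType} {A B : mgraph R} {alpha : R} {ha : 0 < alpha}.
Variable (m : gpoint (scale A ha) -> gpoint B).
Hypothesis Hcov : isometric_covering m.
Local Notation A' := (scale A ha).
Local Notation FF := (F m).

Local Notation cellT n := (gE A' * 'I_n.+1)%type.
Definition wd n (e : gE A') : R := len A' e / n.+1%:R.
Definition incell {n} (c : cellT n) (s : R) : Prop :=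
  (c.2%:R * wd n c.1 <= s <= c.2.+1%:R * wd n c.1).
Definition inY eta b (y : R) : Prop := eta <= y <= len B b - eta.
Definition meets eta b {n} (c : cellT n) : Prop :=
  exists s, [/\ incell c s, isPEb b (FF c.1 s) & inY eta b (param (FF c.1 s))].
Definition Sc {n} (c : cellT n) : set R := [set param (FF c.1 s) | s in incell c].
Definition J eta b {n} (c : cellT n) : set R :=
  if `[< meets eta b c >] then `[inf (Sc c), sup (Sc c)]%classic else set0.

Lemma wd_ge0 n e : 0 <= wd n e.
Proof. by apply: divr_ge0; [exact: ltW (len_pos _ _)|exact: ler0n]. Qed.

Lemma incell_w {n} {c : cellT n} {s s'} : incell c s -> incell c s' -> `|s' - s| <= wd n c.1.
Proof.
rewrite /incell -natr1 mulrDl mul1r => /andP[a1 a2] /andP[b1 b2].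
by rewrite ler_norml; apply/andP; split; lra.
Qed.

Lemma cell_local {eta n b} {c : cellT n} : 2 * wd n c.1 < eta -> meets eta b c ->
  (forall s, incell c s -> isPEb b (FF c.1 s)) /\
  (forall s s', incell c s -> incell c s' ->
     `|param (FF c.1 s') - param (FF c.1 s)| <= `|s' - s|).
Proof.
move=> hw [s0 [c0 b0 y0]].
have w0 := wd_ge0 n c.1.
move: y0; rewrite /inY => /andP[y1 y2].
have loc : forall s, incell c s ->
    isPEb b (FF c.1 s) && (`|param (FF c.1 s) - param (FF c.1 s0)| <= `|s - s0|).
  move=> s cs; have := incell_w c0 cs => hs.
  by apply: (gdist_local _ _ _ _ b0 (lipF m Hcov _ _ _)); lra.
split=> [s /loc /andP[] //|s s' cs cs'].
have /andP[bs hs] := loc _ cs.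
have := incell_w cs cs' => hss.
have := incell_w c0 cs => hs0.
move: hs; rewrite ler_norml => /andP[p1 p2].
have h1 : `|s' - s| < param (FF c.1 s) by lra.
have h2 : `|s' - s| < len B b - param (FF c.1 s) by lra.
by have /andP[] := gdist_local _ _ _ _ bs (lipF m Hcov c.1 s s') h1 h2.
Qed.

Lemma Sc_bound {eta b n} {c : cellT n} : 2 * wd n c.1 < eta -> meets eta b c ->
  exists x0, Sc c x0 /\ forall x x', Sc c x -> Sc c x' -> x' - x <= wd n c.1.
Proof.
move=> hw hm; have [_ H] := cell_local hw hm.
case: (hm) => s0 [c0 _ _]; exists (param (FF c.1 s0)); split; first by exists s0.
move=> _ _ [s cs <-] [s' cs' <-].
have := H _ _ cs cs'; have := incell_w cs cs'; have := ler_norm (param (FF c.1 s') - param (FF c.1 s)).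
lra.
Qed.

Lemma J_meas eta b n (c : cellT n) : measurable (J eta b c).
Proof. by rewrite /J; case: asboolP => _; [exact: measurable_itv|exact: measurable0]. Qed.

Lemma mu_J eta b n (c : cellT n) : 2 * wd n c.1 < eta ->
  (lebesgue_measure (J eta b c) <= (wd n c.1)%:E)%E.
Proof.
move=> hw; have w0 := wd_ge0 n c.1.
rewrite /J; case: asboolP => h; last by rewrite measure0 lee_fin.
rewrite lebesgue_measure_itv /=; case: ifP => _; last by rewrite lee_fin.
have [x0 [Sx0 H]] := Sc_bound hw h.
have ne : (Sc c !=set0)%classic by exists x0.
rewrite -EFinB lee_fin lerBlDl.
apply: ge_sup => // x Sx; rewrite -lerBlDr.
by apply: lb_le_inf => // x' Sx'; rewrite lerBlDr -lerBlDl; apply: H.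
Qed.

Lemma J_mem eta b n (c : cellT n) s : 2 * wd n c.1 < eta -> incell c s ->
  isPEb b (FF c.1 s) -> inY eta b (param (FF c.1 s)) -> J eta b c (param (FF c.1 s)).
Proof.
move=> hw cs bs ys.
have hm : meets eta b c by exists s.
have [x0 [Sx0 H]] := Sc_bound hw hm.
have ne : (Sc c !=set0)%classic by exists x0.
have Sy : Sc c (param (FF c.1 s)) by exists s.
rewrite /J; case: asboolP => // _ /=; rewrite in_itv /=; apply/andP; split.
  apply: (ge_inf _ Sy); exists (x0 - wd n c.1) => x Sx.
  by have := H _ _ Sx Sx0; lra.
apply: (sup_upper_bound _ Sy); split=> //; exists (x0 + wd n c.1) => x Sx.
by have := H _ _ Sx0 Sx; lra.
Qed.

Lemma isPEb_uniq {b b'} {z : gpoint B} : isPEb b z -> isPEb b' z -> b = b'.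
Proof. by case: z => //= e t h /eqP <- /eqP. Qed.

Lemma sum_J eta n (c : cellT n) : 2 * wd n c.1 < eta ->
  (\sum_(b : gE B) lebesgue_measure (J eta b c) <= (wd n c.1)%:E)%E.
Proof.
move=> hw; have w0 := wd_ge0 n c.1.
have [[b0 hb0]|nb] := pselect (exists b, meets eta b c); last first.
  rewrite big1 ?lee_fin // => b _; rewrite /J; case: asboolP => [h|_].
    by exfalso; apply: nb; exists b.
  exact: measure0.
rewrite (bigD1 b0) //= big1 ?adde0; first exact: mu_J.
move=> b nbb; rewrite /J; case: asboolP => [h|_]; last exact: measure0.
have [H _] := cell_local hw hb0.
case: h => s [cs bs _].
by move: nbb; rewrite (isPEb_uniq (H _ cs) bs) eqxx.
Qed.

Lemma sum_wd n : \sum_(c : cellT n) wd n c.1 = \sum_(e : gE A') len A' e.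
Proof.
rewrite -(pair_big xpredT xpredT (fun e (i : 'I_n.+1) => wd n e)) /=.
apply: eq_bigr => e _; rewrite sumr_const card_ord /wd -(mulr_natr (len A' e / _)) divfK //.
Qed.

Definition Dc b : bool := `[< doubly_covered m b >].
Definition K eta n b : set R :=
  if Dc b then G2l (J eta b (n:=n)) (enum {: cellT n}) else Ul (J eta b (n:=n)) (enum {: cellT n}).
Definition Yset eta b : set R := [set y | inY eta b y].
Definition Good eta n b : set R := (Yset eta b `&` K eta n b)%classic.
Definition Vset : set R := Ul (fun v => [set param (m (PV v))]%classic) (enum (gV A')).

Lemma Yset_itv eta b : Yset eta b = `[eta, len B b - eta]%classic.
Proof. by apply/seteqP; split=> y; rewrite /= in_itv. Qed.

Lemma K_meas eta n b : measurable (K eta n b).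
Proof.
by rewrite /K; case: ifP => _; [apply: (G2l_meas _ (J_meas _ _ _))|apply: (Ul_meas _ (J_meas _ _ _))].
Qed.

Lemma Good_meas eta n b : measurable (Good eta n b).
Proof.
apply: (measurableI _ _ _ (K_meas _ _ _)); rewrite Yset_itv; exact: measurable_itv.
Qed.

Lemma good_ineq eta n b :
  (lebesgue_measure (Good eta n b) + (if Dc b then lebesgue_measure (Good eta n b) else 0)
    <= \sum_(c : cellT n) lebesgue_measure (J eta b c))%E.
Proof.
have := list_meas _ (J_meas eta b n) (enum {: cellT n}).
rewrite big_enum /=.
have mU := Ul_meas _ (J_meas eta b n) (enum {: cellT n}).
have mG := G2l_meas _ (J_meas eta b n) (enum {: cellT n}).
have sG := G2l_sub (J eta b (n:=n)) (enum {: cellT n}).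
have mY : measurable (Yset eta b) by rewrite Yset_itv; exact: measurable_itv.
rewrite /Good /K; case: ifP => _ H.
  apply: le_trans H; apply: leeD; apply: le_measure; rewrite ?inE //;
    try exact: measurableI.
    by move=> y [_ /sG].
rewrite adde0; apply: le_trans H; apply: le_trans (leeDl _ (measure_ge0 _ _)).
by apply: le_measure; rewrite ?inE //; first exact: measurableI.
Qed.

Definition Ttot : R := \sum_(e : gE A') len A' e.

Lemma len_le_T e : len A' e <= Ttot.
Proof.
rewrite /Ttot (bigD1 e) //= lerDl; apply: sumr_ge0 => i _; exact: (ltW (len_pos A' i)).
Qed.

Lemma wd_mul n e : wd n e * n.+1%:R = len A' e.
Proof. by rewrite /wd divfK // pnatr_eq0. Qed.

Lemma T_ge0 : 0 <= Ttot.
Proof. by apply: sumr_ge0 => i _; exact: (ltW (len_pos A' i)). Qed.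

Lemma mesh_small d : 0 < d -> exists N, forall n, (N <= n)%N -> forall e, wd n e < d.
Proof.
move=> d0; have T0 : 0 <= Ttot / d by apply: divr_ge0; [exact: T_ge0|exact: ltW].
exists (Num.Def.archi_bound (Ttot / d)) => n Nn e.
have h1 := archi_boundP T0.
have h2 : (Num.Def.archi_bound (Ttot / d))%:R <= n%:R :> R by rewrite ler_nat.
have h3 : n%:R < n.+1%:R :> R by rewrite ltr_nat.
have n0 : 0 < n.+1%:R :> R by rewrite ltr0n.
have hT : Ttot < d * n.+1%:R by rewrite mulrC -ltr_pdivrMr //; lra.
rewrite /wd ltr_pdivrMr //; have := len_le_T e; lra.
Qed.

Lemma cellof n e t : 0 <= t <= len A' e -> exists i : 'I_n.+1, incell (e, i) t.
Proof.
move=> /andP[t0 tL].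
have w0 : 0 < wd n e by apply: divr_gt0; [exact: len_pos|rewrite ltr0n].
have hw := wd_mul n e.
have tw0 : 0 <= t / wd n e by apply: divr_ge0 => //; exact: ltW.
have /andP[k1 k2] := truncn_itv tw0.
have [kn|kn] := ltnP (Num.trunc (t / wd n e)) n.+1.
  exists (Ordinal kn); rewrite /incell /=; apply/andP; split.
    by rewrite -ler_pdivlMr.
  by apply: ltW; rewrite -ltr_pdivrMr.
exists ord_max; rewrite /incell /=.
have : n.+1%:R <= t / wd n e :> R by apply: le_trans k1; rewrite ler_nat.
rewrite ler_pdivlMr // mulrC hw => Lt.
have -> : t = len A' e by apply/eqP; rewrite eq_le tL.
rewrite lexx andbT -hw mulrC ler_wpM2l ?ler_nat //; exact: ltW.
Qed.

Lemma cover eta b y : 0 < eta -> inY eta b y -> ~ Vset y ->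
  exists N, forall n, (N <= n)%N -> K eta n b y.
Proof.
move=> e0 hy nV.
have h : 0 < y < len B b by move: hy; rewrite /inY => /andP[? ?]; apply/andP; split; lra.
pose z := PE h.
have prePE : forall x, m x = z -> exists e t (ht : 0 < t < len A' e), x = PE ht.
  case=> [v|e t ht] mz; last by exists e, t, ht.
  exfalso; apply: nV; apply: (@memU R _ _ _ v); first exact: mem_enum.
  by rewrite /= mz.
have inJ : forall (n : nat) (e : gE A') (t : R) (ht : 0 < t < len A' e), m (PE ht) = z ->
    (forall e, wd n e < eta / 2) -> exists i : 'I_n.+1, incell (e, i) t /\ J eta b (e, i) y.
  move=> n e t ht mz hw.
  have [i ci] : exists i : 'I_n.+1, incell (e, i) t.
    by apply: cellof; case/andP: (ht) => ? ?; apply/andP; split; apply: ltW.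
  exists i; split => //.
  have FE : FF e t = z by rewrite /F (pt_PE _ _ ht).
  have := @J_mem eta b n (e, i) t; rewrite /= FE /= eqxx; apply => //.
  by have := hw e; lra.
have [N1 HN1] := mesh_small (eta / 2) ltac:(lra).
rewrite /K; case Db: (Dc b); last first.
  have [x mx] := Hcov.1 z.
  have [e [t [ht xE]]] := prePE _ mx; subst x.
  exists N1 => n Nn.
  have [i [_ Ji]] := inJ n e t ht mx (HN1 n Nn).
  by apply: (@memU R _ _ _ (e, i)); first exact: mem_enum.
move: Db; rewrite /Dc => /asboolP dc.
have [y1 [y2 [n12 m1 m2]]] := dc y h.
have [e1 [t1 [h1 E1]]] := prePE _ m1; subst y1.
have [e2 [t2 [h2 E2]]] := prePE _ m2; subst y2.
pose gap := if e1 == e2 then `|t1 - t2| else 1.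
have g0 : 0 < gap.
  rewrite /gap; case: eqP => // E; subst e2.
  rewrite normr_gt0 subr_eq0; apply/eqP => E; subst t2; apply: n12.
  by congr PE; apply: bool_irrelevance.
have [N2 HN2] := mesh_small _ g0.
exists (maxn N1 N2) => n; rewrite geq_max => /andP[n1 n2].
have [i1 [c1 J1]] := inJ n e1 t1 h1 m1 (HN1 n n1).
have [i2 [c2 J2]] := inJ n e2 t2 h2 m2 (HN1 n n1).
apply: (@memG2 R _ _ _ (e1, i1) (e2, i2)) => //.
- exact: enum_uniq.
- exact: mem_enum.
- exact: mem_enum.
apply/negP => /eqP [E12 Ei]; subst e2 i2.
have := incell_w c1 c2; have := HN2 n n2 e1; rewrite /gap eqxx /= distrC.
lra.
Qed.

Lemma V_null : lebesgue_measure Vset = 0%E.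
Proof.
have mf : forall v : gV A', measurable [set param (m (PV v))]%classic.
  by move=> v; exact: measurable_set1.
have := list_meas _ mf (enum {: gV A'}).
rewrite big1; last by move=> v _; exact: lebesgue_measure_set1.
move=> H; apply/eqP; rewrite eq_le measure_ge0 andbT.
apply: le_trans H; apply: leeDl; exact: measure_ge0.
Qed.

Lemma conv eta eps b : 0 < eta -> 0 < eps -> exists N, forall n, (N <= n)%N ->
  ((len B b - 2 * eta - eps)%:E <= lebesgue_measure (Good eta n b))%E.
Proof.
move=> e0 p0.
have [le0|gt0] := leP (len B b - 2 * eta - eps) 0.
  by exists 0%N => n _; apply: le_trans (measure_ge0 _ _); rewrite lee_fin.
pose H N := (\bigcap_(n in [set n | (N <= n)%N]) Good eta n b)%classic.
have mH N : measurable (H N).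
  by apply: bigcap_measurable; [exists N => /= | move=> k _; exact: Good_meas].
have ndH : {homo H : n m / (n <= m)%N >-> (n <= m)%O}.
  move=> N N' NN'; rewrite subsetEset => y HNy n Nn; apply: HNy.
  exact: leq_trans NN' Nn.
have mU : measurable (\bigcup_N H N)%classic by apply: bigcup_measurable.
have c1 := nondecreasing_cvg_mu (mu := lebesgue_measure) mH mU ndH.
have nd2 : {homo (lebesgue_measure \o H) : n m / (n <= m)%N >-> (n <= m)%O}.
  move=> i j ij; apply: le_measure; rewrite ?inE; [apply: mH|apply: mH|].
  by have := ndH i j ij; rewrite subsetEset.
have c2 := ereal_nondecreasing_cvgn nd2.
have E : lebesgue_measure (\bigcup_N H N)%classic = ereal_sup (range (lebesgue_measure \o H)).
  by rewrite -(cvg_lim (@ereal_hausdorff R) c1) -(cvg_lim (@ereal_hausdorff R) c2).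
have mY : measurable (Yset eta b) by rewrite Yset_itv; exact: measurable_itv.
have mV : measurable Vset.
  by apply: Ul_meas => v; exact: measurable_set1.
have sub : (Yset eta b `<=` (\bigcup_N H N) `|` Vset)%classic.
  move=> y Yy; have [Vy|nVy] := pselect (Vset y); first by right.
  have [N HN] := cover _ _ _ e0 Yy nVy.
  by left; exists N => // n /= Nn; split => //; apply: HN.
have : (lebesgue_measure (Yset eta b) <= lebesgue_measure (\bigcup_N H N)%classic)%E.
  have h1 : (lebesgue_measure (Yset eta b) <= lebesgue_measure ((\bigcup_N H N) `|` Vset)%classic)%E.
    by apply: le_measure; rewrite ?inE //; exact: measurableU.
  have h2 : (lebesgue_measure ((\bigcup_N H N) `|` Vset)%classic <=
      lebesgue_measure (\bigcup_N H N)%classic + lebesgue_measure Vset)%E.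
    by apply: measureU2; [apply: mU|apply: mV].
  rewrite V_null adde0 in h2.
  exact: le_trans h1 h2.
rewrite E Yset_itv lebesgue_measure_itv /= lte_fin ifT; last by lra.
rewrite -EFinD => Hs.
have : ((len B b - 2 * eta - eps)%:E < ereal_sup [set lebesgue_measure (H i) | i in [set: nat]])%E.
  by apply: lt_le_trans Hs; rewrite lte_fin; lra.
case/ereal_sup_gt => _ [N _ <-] HN.
exists N => n Nn; apply: le_trans (ltW HN) _.
apply: le_measure; rewrite ?inE; [apply: mH|apply: Good_meas|].
by move=> y HNy; apply: HNy.
Qed.


Lemma bound_delta d : 0 < d ->
  \sum_(b : gE B) ((len B b - 3 * d) + (if Dc b then len B b - 3 * d else 0)) <= Ttot.
Proof.
move=> d0.
have [Nf HNf] := choice (fun b : gE B => conv d d b d0 d0).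
have [N0 HN0] := mesh_small (d / 2) ltac:(lra).
pose n := maxn N0 (\max_(b : gE B) Nf b).
have hn0 : (N0 <= n)%N by rewrite leq_maxl.
have hnb : forall b, (Nf b <= n)%N.
  by move=> b; apply: leq_trans (leq_maxr _ _); exact: (leq_bigmax b).
have mesh : forall c : gE A' * 'I_n.+1, 2 * wd n c.1 < d.
  by move=> c; have := HN0 n hn0 c.1; lra.
rewrite -lee_fin -sumEFin.
apply: (@le_trans _ _ (\sum_(b : gE B) (lebesgue_measure (Good d n b) +
     (if Dc b then lebesgue_measure (Good d n b) else 0)))%E).
  apply: lee_sum => b _.
  have hb := HNf b n (hnb b).
  have e3 : len B b - 3 * d = len B b - 2 * d - d by lra.
  rewrite EFinD e3; apply: leeD => //; case: ifP => _ //.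
apply: (@le_trans _ _ (\sum_(b : gE B) \sum_(c : gE A' * 'I_n.+1) lebesgue_measure (J d b c))%E).
  by apply: lee_sum => b _; exact: good_ineq.
rewrite exchange_big /=.
apply: (@le_trans _ _ (\sum_(c : gE A' * 'I_n.+1) (wd n c.1)%:E)%E).
  by apply: lee_sum => c _; apply: sum_J.
by rewrite sumEFin sum_wd.
Qed.

Lemma final_ineq : \sum_(b : gE B) (len B b + (if Dc b then len B b else 0)) <= Ttot.
Proof.
pose C := \sum_(b : gE B) (1 + (if Dc b then 1 else 0) : R).
have C0 : 0 <= C by apply: sumr_ge0 => b _; case: ifP => _; lra.
apply/ler_addgt0Pr => e e0.
pose d := e / (3 * C + 1).
have d0 : 0 < d by apply: divr_gt0 => //; lra.
have := bound_delta _ d0.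
have -> : \sum_(b : gE B) ((len B b - 3 * d) + (if Dc b then len B b - 3 * d else 0)) =
  \sum_(b : gE B) (len B b + (if Dc b then len B b else 0)) - 3 * d * C.
  rewrite /C mulr_sumr -sumrB; apply: eq_bigr => b _; case: ifP => _; ring.
have : 3 * d * C <= e.
  have -> : 3 * d * C = e * (3 * C / (3 * C + 1)) by rewrite /d; field; lra.
  rewrite -[X in _ <= X]mulr1; apply: ler_wpM2l; first exact: ltW.
  by rewrite ler_pdivrMr ?mul1r; lra.
lra.
Qed.

End Main.

Theorem theorem1 (R : realType) (A B : mgraph R) (alpha : R) (ha : 0 < alpha)
  (m : gpoint (scale A ha) -> gpoint B) :
  isometric_covering m ->
  (perimeter B + \sum_(e : gE B | `[< doubly_covered m e >]) len B e) / perimeter A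
    <= alpha.
Proof.
move=> Hcov; have := final_ineq m Hcov.
rewrite big_split /= -big_mkcond /= /Ttot /= -mulr_sumr -/(perimeter A).
have PA : 0 <= perimeter A by apply: sumr_ge0 => e _; exact: (ltW (len_pos A e)).
have [->|PA0] := eqVneq (perimeter A) 0; first by rewrite invr0 !mulr0 => _; exact: (ltW ha).
have PA1 : 0 < perimeter A by rewrite lt_def PA0 PA.
by rewrite ler_pdivrMr // mulrC.
Qed.
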